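(* Let $q$ be an odd prime power, $n$ a positive integer with $n\mid(q-1)$, $\lambda\in\mathbb{F}_q^{*}$ with multiplicative order dividing $\frac{q-1}{n}$, and let $\alpha_1,\dots,\alpha_n\in\mathbb{F}_q^{*}$ be the (pairwise distinct) roots of $x^n-\lambda$, i.e. $x^n-\lambda=\prod_{i=1}^n(x-\alpha_i)$, in some fixed order. Let $\ell\ge0$, $\boldsymbol\eta=(\eta_0,\dots,\eta_\ell)\in\mathbb{F}_q^{\ell+1}\setminus\{\boldsymbol0\}$, and let $k$ be an integer with $2\le k\le\frac{n-2\ell-1}{2}$. Let $\boldsymbol v=(v_1,\dots,v_n)$ with $v_i\in\{-1,1\}$ for $k\le i\le n$ and $v_i\in\mathbb{F}_q\setminus\{-1,0,1\}$ for $1\le i\le k-1$. Then the $( * )$-$(\mathcal{L},\mathcal{P})$-TGRS code $\mathcal{C}$ (defined in the context) is an LCD code, i.e. $\mathcal{C}\cap\mathcal{C}^{\perp}=\{\boldsymbol0\}$.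
   Context: The $( * )$-$(\mathcal{L},\mathcal{P})$-TGRS code is $\mathcal{C}=\{(v_1f(\alpha_1),\dots,v_nf(\alpha_n)) : f\in\mathcal{F}_{n,k,\boldsymbol\eta}\}$, where $\mathcal{F}_{n,k,\boldsymbol\eta}=\{\sum_{i=0}^{k-1}f_ix^i+f_0\sum_{j=0}^{\ell}\eta_jx^{k+j} : f_i\in\mathbb{F}_q\}$; equivalently it is generated by the $k\times n$ matrix whose first row is $\big(v_j(1+\sum_{t=0}^{\ell}\eta_t\alpha_j^{k+t})\big)_{j}$ and whose row $i$ ($1\le i\le k-1$) is $(v_j\alpha_j^{i})_j$. $\mathcal{C}^{\perp}$ is the dual with respect to the standard inner product $\langle\boldsymbol x,\boldsymbol y\rangle=\sum_i x_iy_i$. *)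

(* Defs.v *)
From HB Require Import structures.
From mathcomp Require Import all_boot all_order all_algebra all_field.
Set Implicit Arguments. Unset Strict Implicit. Unset Printing Implicit Defensive.
Import GRing.Theory.
Local Open Scope ring_scope.

(* The polynomial  f(x) = sum_{i<k} f_i x^i + f_0 * sum_{j<=ell} eta_j x^(k+j)
   of F_{n,k,eta}, given by its coefficient function f (only f_0..f_(k-1) matter). *)
Definition tgrs_poly (F : fieldType) (k ell : nat) (eta : 'I_ell.+1 -> F)
  (f : nat -> F) : {poly F} :=
  \sum_(i < k) f i *: 'X^i + f 0%N *: \sum_(j < ell.+1) eta j *: 'X^(k + j).

Definition tgrs_word (F : fieldType) (n k ell : nat) (alpha v : 'I_n -> F)
  (eta : 'I_ell.+1 -> F) (f : nat -> F) : 'rV[F]_n :=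
  \row_(j < n) (v j * (tgrs_poly k eta f).[alpha j]).

Definition in_tgrs (F : fieldType) (n k ell : nat) (alpha v : 'I_n -> F)
  (eta : 'I_ell.+1 -> F) (c : 'rV[F]_n) : Prop :=
  exists f : nat -> F, c = @tgrs_word F n k ell alpha v eta f.

Definition in_dual (F : fieldType) (n : nat) (C : 'rV[F]_n -> Prop)
  (c : 'rV[F]_n) : Prop :=
  forall x, C x -> \sum_(i < n) x 0 i * c 0 i = 0.

Definition LCD (F : fieldType) (n : nat) (C : 'rV[F]_n -> Prop) : Prop :=
  forall c, C c -> in_dual C c -> c = 0.

(* Main.v *)
Require Import Defs.
From HB Require Import structures.
From mathcomp Require Import all_boot all_order all_algebra all_field.
From mathcomp Require Import ring zify.
Import GRing.Theory.
Local Open Scope ring_scope.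
Set Implicit Arguments. Unset Strict Implicit.

Lemma size_sumX (F : fieldType) m (c : 'I_m -> F) : (size (\sum_(i < m) c i *: 'X^i)%R <= m)%N.
Proof.
apply/leq_sizeP => j hj; rewrite coef_sum big1 // => i _.
rewrite coefZ coefXn; case: eqP => [e|]; last by rewrite mulr0.
by move: (ltn_ord i); rewrite -e ltnNge hj.
Qed.

Lemma tgrs_size (F : fieldType) k ell (eta : 'I_ell.+1 -> F) f :
  (size (tgrs_poly k eta f) <= k + ell.+1)%N.
Proof.
rewrite /tgrs_poly; apply: leq_trans (size_polyD _ _) _.
rewrite geq_max; apply/andP; split.
  by apply: leq_trans (size_sumX _) _; rewrite leq_addr.
apply: leq_trans (size_scale_leq _ _) _.
have -> : \sum_(j < ell.+1) eta j *: 'X^(k + j) = 'X^k * \sum_(j < ell.+1) eta j *: 'X^j.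
  by rewrite mulr_sumr; apply: eq_bigr => j _; rewrite exprD scalerAr.
apply: leq_trans (size_polyMleq _ _) _; rewrite size_polyXn.
by have := size_sumX eta; rewrite addSn /=; move=> h; rewrite leq_add2l.
Qed.

Lemma tgrs_coef0 (F : fieldType) k ell (eta : 'I_ell.+1 -> F) f :
  (0 < k)%N -> (tgrs_poly k eta f)`_0 = f 0%N.
Proof.
case: k => // k _; rewrite /tgrs_poly coefD coefZ !coef_sum.
rewrite big_ord_recl /= coefZ coefXn eqxx mulr1 big1 ?addr0.
  by rewrite big1 ?mulr0 ?addr0 // => j _; rewrite coefZ coefXn mulr0.
by move=> i _; rewrite coefZ coefXn mulr0.
Qed.

Lemma tgrs_id (F : fieldType) k ell (eta : 'I_ell.+1 -> F) (r : {poly F}) :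
  r`_0 = 0 -> (size r <= k)%N -> tgrs_poly k eta (fun i => r`_i) = r.
Proof.
move=> r0 hr; rewrite /tgrs_poly r0 scale0r addr0 -poly_def.
apply/polyP => j; rewrite coef_poly; case: ltnP => // hj.
by rewrite nth_default // (leq_trans hr hj).
Qed.
Lemma card_natr0 (F : finFieldType) : (#|F|%:R : F) = 0.
Proof.
have := @reindex_inj F +%R 0 F (fun x => x + 1) predT id (addIr 1).
rewrite big_split /= sumr_const.
move=> /eqP; rewrite -subr_eq0 opprD addNKr oppr_eq0 => /eqP.
by rewrite cardT.
Qed.

Lemma natr_neq0 (F : finFieldType) (n : nat) : (n %| #|F|.-1)%N -> (n%:R : F) != 0.
Proof.
case/dvdnP=> t Ht.
have h : (#|F|.-1%:R : F) = -1.
  have := card_natr0 F.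
  have : (0 < #|F|)%N by apply/card_gt0P; exists 0.
  case: #|F| => //= m _; rewrite -addn1 natrD => /eqP; rewrite addr_eq0 => /eqP.
  done.
apply/eqP=> h0; move: h; rewrite Ht natrM h0 mulr0 => /eqP.
by rewrite eq_sym oppr_eq0 oner_eq0.
Qed.
Lemma alpha_root (F : fieldType) n (lam : F) (alpha : 'I_n -> F) :
  lam != 0 -> 'X^n - lam%:P = \prod_(i < n) ('X - (alpha i)%:P) ->
  forall j, alpha j ^+ n = lam /\ alpha j != 0.
Proof.
move=> hl hP j.
have := congr1 (fun p => p.[alpha j]) hP => /=.
rewrite horner_prod (bigD1 j) //= hornerXsubC subrr mul0r.
rewrite !hornerE => /eqP; rewrite subr_eq0 => /eqP ha; split => //.
apply/eqP=> a0; move: ha; rewrite a0 expr0n.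
case: n alpha j hP a0 => [|n] alpha j; first by case: j.
by move=> _ _ /= /eqP; rewrite eq_sym (negbTE hl).
Qed.

Lemma alpha_inj (F : fieldType) n (lam : F) (alpha : 'I_n -> F) :
  (n%:R : F) != 0 ->
  lam != 0 -> 'X^n - lam%:P = \prod_(i < n) ('X - (alpha i)%:P) ->
  injective alpha.
Proof.
move=> hn hl hP a b hab; apply/eqP; apply/negPn/negP => nab.
have [_ a0] := @alpha_root _ _ _ _ hl hP a.
set A := 'X - (alpha a)%:P.
have : 'X^n - lam%:P = A * (A * \prod_(i < n | (i != a) && (i != b)) ('X - (alpha i)%:P)).
  rewrite hP (bigD1 a) //= (bigD1 b) /=; last by rewrite eq_sym.
  by rewrite /A hab; congr (_ * (_ * _)); apply: eq_bigl => i; rewrite andbC.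
move=> /(congr1 (fun p => (deriv p).[alpha a])) /=.
rewrite derivM derivB derivXn derivC subr0 hornerD !hornerM /A hornerXsubC subrr.
rewrite !(mul0r, mulr0, addr0) hornerMn hornerXn => /eqP.
rewrite -mulr_natl mulf_eq0 (negbTE hn) /= expf_eq0 (negbTE a0) andbF //.
Qed.

Lemma power_sum (F : fieldType) n (lam : F) (alpha : 'I_n -> F) :
  (0 < n)%N -> (n%:R : F) != 0 ->
  lam != 0 -> 'X^n - lam%:P = \prod_(i < n) ('X - (alpha i)%:P) ->
  forall m, (0 < m < n)%N -> \sum_(j < n) alpha j ^+ m = 0.
Proof.
move=> n0 hn hl hP m /andP[m0 mn].
have ainj := alpha_inj hn hl hP.
have hr := @alpha_root _ _ _ _ hl hP.
pose j0 : 'I_n := Ordinal n0.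
have a0 := (hr j0).2.
pose rs := [seq alpha j / alpha j0 | j <- enum 'I_n].
have : has n.-primitive_root rs.
  apply: cyclic.has_prim_root => //.
  - apply/allP => x /mapP[j _ ->]; rewrite unity_rootE exprMn exprVn.
    by rewrite (hr j).1 (hr j0).1 divff.
  - rewrite map_inj_uniq ?enum_uniq // => a b /(mulIf _).
    by move=> /(_ (invr_neq0 a0)) /ainj.
  - by rewrite size_map size_enum_ord.
case/hasP=> z _ pz.
have z0 : z != 0 by rewrite (prim_root_eq0 pz) -lt0n.
have ex : forall j, exists i, alpha i == z * alpha j.
  move=> j; have := congr1 (fun p => p.[z * alpha j]) hP => /=.
  rewrite !hornerE exprMn (prim_expr_order pz) mul1r (hr j).1 subrr horner_prod.
  move=> /esym /eqP /prodf_eq0 [i _]; rewrite hornerXsubC subr_eq0 eq_sym => h.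
  by exists i.
pose s j := odflt j [pick i | alpha i == z * alpha j].
have hs : forall j, alpha (s j) = z * alpha j.
  move=> j; rewrite /s; case: pickP => [i /eqP //|].
  by have [i hi] := ex j => /(_ i); rewrite hi.
have sinj : injective s.
  by move=> a b h; apply: ainj; apply: (mulfI z0); rewrite -!hs h.
have := reindex_inj (op := +%R) (x := 0) (P := predT) (F := fun j => alpha j ^+ m) sinj.
under [X in _ = X -> _]eq_bigr do rewrite hs exprMn.
rewrite -mulr_sumr => /eqP; rewrite -subr_eq0 -{1}(mul1r (\sum_i _)) -mulrBl.
rewrite mulf_eq0 subr_eq0 eq_sym -(prim_order_dvd pz) => /orP[|/eqP //].
by move/dvdn_leq => /(_ m0); rewrite leqNgt mn.
Qed.

Lemma poly_sum (F : fieldType) n (lam : F) (alpha : 'I_n -> F) :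
  (0 < n)%N -> (n%:R : F) != 0 ->
  lam != 0 -> 'X^n - lam%:P = \prod_(i < n) ('X - (alpha i)%:P) ->
  forall r : {poly F}, (size r <= n)%N -> \sum_(j < n) r.[alpha j] = n%:R * r`_0.
Proof.
move=> n0 hn hl hP r hr.
under eq_bigr do rewrite (horner_coef_wide _ hr).
rewrite exchange_big /=.
case: n n0 alpha hn hP hr => // n' _ alpha hn hP hr.
rewrite big_ord_recl /=.
under eq_bigr do rewrite expr0 mulr1.
rewrite sumr_const card_ord big1 ?addr0; first by rewrite mulr_natl.
move=> i _; rewrite -mulr_sumr (power_sum _ hn hl hP) ?mulr0 //.
by rewrite /= ltnS ltn_ord.
Qed.

Theorem theorem4p1 (F : finFieldType) (n : nat) (lam : F)
  (alpha : 'I_n -> F) (ell : nat) (eta : 'I_ell.+1 -> F) (k : nat)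
  (v : 'I_n -> F) :
  odd #|F| ->
  (0 < n)%N ->
  (n %| #|F|.-1)%N ->
  lam != 0 ->
  lam ^+ (#|F|.-1 %/ n) = 1 ->
  'X^n - lam%:P = \prod_(i < n) ('X - (alpha i)%:P) ->
  (exists j, eta j != 0) ->
  (2 <= k)%N ->
  (2 * k + 2 * ell + 1 <= n)%N ->
  (forall i : 'I_n, (k.-1 <= i)%N -> v i = 1 \/ v i = -1) ->
  (forall i : 'I_n, (i < k.-1)%N -> [/\ v i != -1, v i != 0 & v i != 1]) ->
  LCD (@in_tgrs F n k ell alpha v eta).
Proof.
move=> _ n0 hdiv hl _ hP _ hk hkn hv1 hv2 c [f ->] hdual.
have hn := natr_neq0 hdiv.
have hr := alpha_root hl hP.
have ainj := alpha_inj hn hl hP.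
have k0 : (0 < k)%N by apply: leq_trans hk.
set p := tgrs_poly k eta f.
pose d i := v i ^+ 2 - 1.
have orth : forall g, n%:R * ((tgrs_poly k eta g)`_0 * p`_0) +
    \sum_(i < n | (i < k.-1)%N) d i * ((tgrs_poly k eta g).[alpha i] * p.[alpha i]) = 0.
  move=> g; set q := tgrs_poly k eta g.
  have := hdual _ (ex_intro _ g erefl); rewrite /tgrs_word -/p -/q.
  under eq_bigr do rewrite !mxE.
  have e : forall i, v i * q.[alpha i] * (v i * p.[alpha i]) =
      (q * p).[alpha i] + d i * (q.[alpha i] * p.[alpha i]).
    by move=> i; rewrite hornerM /d; ring.
  under eq_bigr do rewrite e.
  rewrite big_split /= (poly_sum n0 hn hl hP) ?coef0M; last first.
    apply: leq_trans (size_polyMleq _ _) _; apply: leq_trans hkn.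
    have := tgrs_size k eta g; have := tgrs_size k eta f; rewrite -/p -/q.
    move=> h1 h2; have := leq_add h2 h1; rewrite addnS /=; lia.
  rewrite [X in _ + X](bigID (fun i : 'I_n => (i < k.-1)%N)) /=.
  rewrite [X in _ + (_ + X)]big1 ?addr0 // => i; rewrite -leqNgt => /hv1.
  by rewrite /d => -[] ->; rewrite ?expr1n ?sqrrN ?expr1n subrr mul0r.
have hkn' : (k.-1 <= n)%N by lia.
pose w := widen_ord hkn'.
pose beta i := alpha (w i).
have binj : injective beta.
  by move=> a b /ainj /(congr1 val) /= /val_inj.
have orth' : forall g, n%:R * ((tgrs_poly k eta g)`_0 * p`_0) +
    \sum_(i < k.-1) d (w i) * ((tgrs_poly k eta g).[beta i] * p.[beta i]) = 0.
  by move=> g; rewrite -(big_ord_narrow (F := fun i => d i * ((tgrs_poly k eta g).[alpha i] * p.[alpha i]))); apply: orth.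
have dnz : forall i, d (w i) != 0.
  move=> i; have [h1 _ h2] := hv2 (w i) (ltn_ord i).
  have -> : d (w i) = (v (w i) - 1) * (v (w i) + 1) by rewrite /d; ring.
  rewrite mulf_neq0 //.
    by rewrite subr_eq0.
  by rewrite addr_eq0.
have stepA : forall i0, p.[beta i0] = 0.
  move=> i0.
  pose Q := 'X * \prod_(i < k.-1 | i != i0) ('X - (beta i)%:P).
  have Q0 : Q`_0 = 0 by rewrite coef0M coefX mul0r.
  have Qs : (size Q <= k)%N.
    apply: leq_trans (size_polyMleq _ _) _; rewrite size_polyX /=.
    apply: leq_trans (leq_add (leqnn 1) (size_poly_prod_leq _ _)) _.
    under eq_bigr do rewrite size_XsubC.
    rewrite sum_nat_const.
    have -> : #|[pred i : 'I_k.-1 | i != i0]| = k.-2.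
      by rewrite (eq_card (B := predC1 i0)) // cardC1 card_ord.
    lia.
  have := orth' (fun i => Q`_i); rewrite tgrs_id // Q0 mul0r mulr0 add0r.
  rewrite (bigD1 i0) //= big1 ?addr0; last first.
    move=> i hi; rewrite /Q hornerM horner_prod (bigD1 i) //= hornerXsubC subrr.
    by rewrite mul0r mulr0 mul0r mulr0.
  move=> /eqP; rewrite !mulf_eq0 (negbTE (dnz i0)) /= => /orP[|/eqP //].
  rewrite /Q hornerM hornerX horner_prod mulf_eq0 (negbTE (hr _).2) /=.
  move=> /prodf_eq0 [i hi]; rewrite hornerXsubC subr_eq0 => /eqP /binj e.
  by move: hi; rewrite e eqxx.
have f0 : f 0%N = 0.
  have := orth' (fun i => (i == 0%N)%:R); rewrite tgrs_coef0 // mul1r.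
  rewrite big1 ?addr0; last by move=> i _; rewrite stepA !mulr0.
  move=> /eqP; rewrite mulf_eq0 (negbTE hn) /= /p tgrs_coef0 //.
  by move/eqP.
have p0 : p = 0.
  apply/eqP; apply/negPn/negP => pn0.
  have hall : all (root p) (0 :: [seq beta i | i <- enum 'I_k.-1]).
    rewrite /= rootE horner_coef0 /p tgrs_coef0 // f0 eqxx /=.
    by apply/allP => x /mapP[i _ ->]; rewrite rootE stepA.
  have hu : uniq (0 :: [seq beta i | i <- enum 'I_k.-1]).
    rewrite /= map_inj_uniq ?enum_uniq // andbT.
    by apply/mapP => -[i _] /esym /eqP; rewrite (negbTE (hr _).2).
  have := max_poly_roots pn0 hall hu; rewrite /= size_map size_enum_ord.
  have : (size p <= k)%N.
    by rewrite /p /tgrs_poly f0 scale0r addr0; apply: size_sumX.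
  by move=> h1; rewrite prednK // ltnNge h1.
apply/rowP => j; rewrite /tgrs_word !mxE -/p p0 horner0 mulr0 //=.
Qed.
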